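(* Let $\alpha_1\ge\alpha_2\ge\cdots\ge\alpha_{14}\ge0$ be real numbers with $\alpha_1+\cdots+\alpha_{14}=1$ and $\alpha_1+\alpha_2<\frac12$, and suppose that no sub-sum $\sum_{i\in\mathcal{S}}\alpha_i$, for $\mathcal{S}\subseteq\{1,\dots,14\}$, lies in $[\frac{5}{12},\frac{7}{12}]$. Then $\alpha_5>\frac16$ and \[ \alpha_1+\alpha_2+\alpha_6+\alpha_7+\cdots+\alpha_{14}<\frac{5}{12}. \] *)

(* Defs.v *)
(* Indices 1..14 of the paper are represented 0-based by 'I_14. *)
From HB Require Import structures.
From mathcomp Require Import all_boot all_order all_algebra.
Set Implicit Arguments. Unset Strict Implicit. Unset Printing Implicit Defensive.
Import Order.TTheory GRing.Theory Num.Theory.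

(* Main.v *)
Require Import Defs.
From HB Require Import structures.
From mathcomp Require Import all_boot all_order all_algebra.
From mathcomp Require Import lra.
Import Order.TTheory GRing.Theory Num.Theory.
Local Open Scope ring_scope.

Lemma setsumE (R : realFieldType) (a : 'I_14 -> R) (P : pred nat) :
  \sum_(i in [set i : 'I_14 | P (val i)]) a i =
  \sum_(0 <= i < 14) (if P i then a (inord i) else 0).
Proof.
rewrite big_mkcond /= big_mkord.
apply: eq_bigr => i _; rewrite inE inord_val //.
Qed.

Lemma ordsumE (R : realFieldType) (a : 'I_14 -> R) (P : pred nat) :
  \sum_(i < 14 | P i) a i =
  \sum_(0 <= i < 14) (if P i then a (inord i) else 0).
Proof.
rewrite big_mkcond /= big_mkord.
apply: eq_bigr => i _; rewrite inord_val //.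
Qed.

Lemma fullsumE (R : realFieldType) (a : 'I_14 -> R) :
  \sum_(i < 14) a i = \sum_(0 <= i < 14) a (inord i).
Proof.
rewrite big_mkord; apply: eq_bigr => i _; rewrite inord_val //.
Qed.

Lemma gapE (R : realFieldType) (a : 'I_14 -> R) (P : pred nat)
  (hgap : forall S : {set 'I_14},
      ~ (5 / 12 <= \sum_(i in S) a i <= 7 / 12)) :
  let s := \sum_(0 <= i < 14) (if P i then a (inord i) else 0) in
  s < 5 / 12 \/ 7 / 12 < s.
Proof.
move=> s; have := hgap [set i : 'I_14 | P (val i)].
rewrite setsumE -/s => H; case: (ltP s (5/12)) => h1; first by left.
case: (ltP (7/12) s) => h2; first by right.
by exfalso; apply: H; apply/andP; split.
Qed.

Ltac expand H := rewrite /= !big_nat_recl // big_geq //= in H.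

Theorem lemma12 (R : realFieldType) (a : 'I_14 -> R)
  (hnonneg : forall i : 'I_14, 0 <= a i)
  (hmono : forall i j : 'I_14, (i <= j)%N -> a j <= a i)
  (hsum : \sum_(i < 14) a i = 1)
  (htop : a (inord 0) + a (inord 1) < 1 / 2)
  (hgap : forall S : {set 'I_14},
      ~ (5 / 12 <= \sum_(i in S) a i <= 7 / 12)) :
  1 / 6 < a (inord 4) /\
  a (inord 0) + a (inord 1) + \sum_(i < 14 | (5 <= i)%N) a i < 5 / 12.
Proof.
have m : forall k, (k < 13)%N -> a (inord k.+1) <= a (inord k).
  move=> k hk; apply: hmono; rewrite !inordK //; exact: ltnW.
have m0 := m 0%N erefl; have m1 := m 1%N erefl; have m2 := m 2%N erefl.
have m3 := m 3%N erefl; have m4 := m 4%N erefl; have m5 := m 5%N erefl.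
have m6 := m 6%N erefl; have m7 := m 7%N erefl; have m8 := m 8%N erefl.
have m9 := m 9%N erefl; have m10 := m 10%N erefl; have m11 := m 11%N erefl.
have m12 := m 12%N erefl.
rewrite fullsumE in hsum; expand hsum.
have g01 := @gapE _ a (fun i => i < 2)%N hgap; expand g01.
have h01 : a (inord 0) + a (inord 1) < 5/12 by case: g01; lra.
have p1 : 1 / 6 < a (inord 4).
  rewrite ltNge; apply/negP => h4.
  have b5 := le_trans m4 h4.
  have b6 := le_trans m5 b5.
  have b7 := le_trans m6 b6.
  have b8 := le_trans m7 b7.
  have b9 := le_trans m8 b8.
  have b10 := le_trans m9 b9.
  have b11 := le_trans m10 b10.
  have b12 := le_trans m11 b11.
  have b13 := le_trans m12 b12.
  have g1 := @gapE _ a (fun i => (i < 2) || (4 <= i < 5))%N hgap; expand g1.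
  have s1 : a (inord 0) + a (inord 1) + a (inord 4) < 5/12 by case: g1; clear -h01 h4; lra.
  have g2 := @gapE _ a (fun i => (i < 2) || (4 <= i < 6))%N hgap; expand g2.
  have s2 : a (inord 0) + a (inord 1) + a (inord 4) + a (inord 5) < 5/12 by case: g2; clear -s1 b5; lra.
  have g3 := @gapE _ a (fun i => (i < 2) || (4 <= i < 7))%N hgap; expand g3.
  have s3 : a (inord 0) + a (inord 1) + a (inord 4) + a (inord 5) + a (inord 6) < 5/12 by case: g3; clear -s2 b6; lra.
  have g4 := @gapE _ a (fun i => (i < 2) || (4 <= i < 8))%N hgap; expand g4.
  have s4 : a (inord 0) + a (inord 1) + a (inord 4) + a (inord 5) + a (inord 6)
     + a (inord 7) < 5/12 by case: g4; clear -s3 b7; lra.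
  have g5 := @gapE _ a (fun i => (i < 2) || (4 <= i < 9))%N hgap; expand g5.
  have s5 : a (inord 0) + a (inord 1) + a (inord 4) + a (inord 5) + a (inord 6)
     + a (inord 7) + a (inord 8) < 5/12 by case: g5; clear -s4 b8; lra.
  have g6 := @gapE _ a (fun i => (i < 2) || (4 <= i < 10))%N hgap; expand g6.
  have s6 : a (inord 0) + a (inord 1) + a (inord 4) + a (inord 5) + a (inord 6)
     + a (inord 7) + a (inord 8) + a (inord 9) < 5/12 by case: g6; clear -s5 b9; lra.
  have g7 := @gapE _ a (fun i => (i < 2) || (4 <= i < 11))%N hgap; expand g7.
  have s7 : a (inord 0) + a (inord 1) + a (inord 4) + a (inord 5) + a (inord 6)
     + a (inord 7) + a (inord 8) + a (inord 9) + a (inord 10) < 5/12 by case: g7; clear -s6 b10; lra.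
  have g8 := @gapE _ a (fun i => (i < 2) || (4 <= i < 12))%N hgap; expand g8.
  have s8 : a (inord 0) + a (inord 1) + a (inord 4) + a (inord 5) + a (inord 6)
     + a (inord 7) + a (inord 8) + a (inord 9) + a (inord 10) + a (inord 11) < 5/12
     by case: g8; clear -s7 b11; lra.
  have g9 := @gapE _ a (fun i => (i < 2) || (4 <= i < 13))%N hgap; expand g9.
  have s9 : a (inord 0) + a (inord 1) + a (inord 4) + a (inord 5) + a (inord 6)
     + a (inord 7) + a (inord 8) + a (inord 9) + a (inord 10) + a (inord 11)
     + a (inord 12) < 5/12 by case: g9; clear -s8 b12; lra.
  have g10 := @gapE _ a (fun i => (i < 2) || (4 <= i < 14))%N hgap; expand g10.
  case: g10; clear -s9 b13 hsum h01 m0 m1 m2; lra.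
split => //.
rewrite (@ordsumE _ a (fun i => 5 <= i)%N) /= !big_nat_recl // big_geq //=.
have gx := @gapE _ a (fun i => (i < 2) || (5 <= i))%N hgap; expand gx.
case: gx; clear -h01 hsum p1 m0 m1 m2 m3; lra.
Qed.
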